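(* Let $\star$ be a $t$-definer. For every $r>0$ there exists $r_1>0$ such that $a\star b<r$ for all $a,b\in[0,r_1)$, i.e. $[0,r_1)\star[0,r_1)\subseteq[0,r)$.
   Context: A $t$-definer is a function $\star:[0,\infty)\times[0,\infty)\to[0,\infty)$ such that for all $a,b,c\ge 0$: $a\star b=b\star a$; $a\star(b\star c)=(a\star b)\star c$; if $a\le b$ then $a\star c\le b\star c$; $a\star 0=a$; and $\star$ is continuous in its first variable with respect to the Euclidean topology. *)

(* Defs.v *)
From Stdlib Require Import Reals.
Open Scope R_scope.

(* A t-definer: an operation on [0,oo), modelled as a function R -> R -> R
   whose behaviour is only constrained on nonnegative arguments. *)
Definition t_definer (star : R -> R -> R) : Prop :=
  (forall a b, 0 <= a -> 0 <= b -> 0 <= star a b) /\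
  (forall a b, 0 <= a -> 0 <= b -> star a b = star b a) /\
  (forall a b c, 0 <= a -> 0 <= b -> 0 <= c ->
      star a (star b c) = star (star a b) c) /\
  (forall a b c, 0 <= a -> 0 <= b -> 0 <= c -> a <= b -> star a c <= star b c) /\
  (forall a, 0 <= a -> star a 0 = a) /\
  (forall b, 0 <= b -> forall a, 0 <= a ->
      forall eps, 0 < eps -> exists delta, 0 < delta /\
        forall x, 0 <= x -> Rabs (x - a) < delta -> Rabs (star x b - star a b) < eps).

(* Main.v *)
Require Import Defs.
From Stdlib Require Import Reals Lra.
Open Scope R_scope.

Theorem lemma2p3 (star : R -> R -> R) (Hstar : t_definer star) :
  forall r, 0 < r -> exists r1, 0 < r1 /\
    forall a b, 0 <= a < r1 -> 0 <= b < r1 -> star a b < r.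
Proof.
  destruct Hstar as [Hnn [Hcom [Hass [Hmon [H0 Hcont]]]]].
  intros r Hr.
  set (c := r / 2).
  assert (Hc : 0 < c) by (unfold c; lra).
  assert (Hs0 : star 0 c = c).
  { rewrite Hcom by lra. apply H0; lra. }
  destruct (Hcont c ltac:(lra) 0 ltac:(lra) (r / 2) ltac:(lra)) as [d [Hd Hdel]].
  exists (Rmin d c). split.
  { apply Rmin_pos; lra. }
  intros a b Ha Hb.
  assert (Hmd := Rmin_l d c). assert (Hmc := Rmin_r d c).
  assert (Hab : star a b = star b a) by (apply Hcom; lra).
  assert (H1 : star b a <= star c a) by (apply Hmon; lra).
  assert (H2 : star c a = star a c) by (apply Hcom; lra).
  assert (H3 : Rabs (star a c - star 0 c) < r / 2).
  { apply Hdel; [lra|]. rewrite Rminus_0_r, Rabs_right; lra. }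
  rewrite Hs0 in H3.
  apply Rabs_def2 in H3. unfold c in *. lra.
Qed.
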